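(* Fix $q\in[1,\infty)$. Let $(\mathcal X,d)$ be a metric space with the $q$-barycenter property: for every $K\ge1$, $\boldsymbol w\in\Delta^{K-1}$ and $\boldsymbol a\in\mathcal X^K$ the function $C\mapsto\sum_{s=1}^Kw_sd^q(a_s,C)$ attains its minimum on $\mathcal X$. Let $\boldsymbol a=(a_1,\dots,a_K)\in\mathcal X^K$, $\boldsymbol w\in\Delta^{K-1}$ and $C_{\boldsymbol a}\in\arg\min_C\sum_sw_sd^q(a_s,C)$. Fix $\alpha\in[0,1]$ and assume $\boldsymbol b\in\mathcal X^K$ satisfies, for all $s$, $$d(a_s,C_{\boldsymbol a})=d(a_s,b_s)+d(b_s,C_{\boldsymbol a}),\qquad d(b_s,a_s)=(1-\alpha^{1/q})\,d(a_s,C_{\boldsymbol a}).$$ Then $\boldsymbol b$ solves $$\inf_{\boldsymbol b'\in\mathcal X^K}\Big\{\sum_{s=1}^Kw_sd^q(b'_s,a_s)\;:\;\min_{C\in\mathcal X}\sum_{s=1}^Kw_sd^q(b'_s,C)\le\alpha\sum_{s=1}^Kw_sd^q(a_s,C_{\boldsymbol a})\Big\}.$$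
   Context: $\Delta^{K-1}$ is the probability simplex in $\mathbb R^K$. *)

(* Defs.v *)
From mathcomp Require Import all_boot all_order all_algebra.
From mathcomp Require Import all_classical all_reals all_analysis.
Set Implicit Arguments. Unset Strict Implicit. Unset Printing Implicit Defensive.
Import Order.TTheory GRing.Theory Num.Theory.
Local Open Scope ring_scope.

Definition is_metric (R : realType) (X : Type) (d : X -> X -> R) : Prop :=
  (forall x y, 0 <= d x y) /\
  (forall x y, d x y = 0 <-> x = y) /\
  (forall x y, d x y = d y x) /\
  (forall x y z, d x z <= d x y + d y z).

Definition in_simplex (R : realType) (K : nat) (w : 'I_K -> R) : Prop :=
  (forall s, 0 <= w s) /\ \sum_(s < K) w s = 1.

Definition bary_cost (R : realType) (X : Type) (d : X -> X -> R) (q : R)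
    (K : nat) (w : 'I_K -> R) (a : 'I_K -> X) (C : X) : R :=
  \sum_(s < K) w s * powR (d (a s) C) q.

Definition is_bary_argmin (R : realType) (X : Type) (d : X -> X -> R) (q : R)
    (K : nat) (w : 'I_K -> R) (a : 'I_K -> X) (C : X) : Prop :=
  forall C' : X, bary_cost d q w a C <= bary_cost d q w a C'.

Definition q_barycenter_property (R : realType) (X : Type) (d : X -> X -> R)
    (q : R) : Prop :=
  forall (K : nat) (w : 'I_K -> R) (a : 'I_K -> X),
    (1 <= K)%N -> in_simplex w -> exists C : X, is_bary_argmin d q w a C.

Definition feasible (R : realType) (X : Type) (d : X -> X -> R) (q : R)
    (K : nat) (w : 'I_K -> R) (bound : R) (b' : 'I_K -> X) : Prop :=
  exists C : X, is_bary_argmin d q w b' C /\ bary_cost d q w b' C <= bound.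

Definition move_cost (R : realType) (X : Type) (d : X -> X -> R) (q : R)
    (K : nat) (w : 'I_K -> R) (a b' : 'I_K -> X) : R :=
  \sum_(s < K) w s * powR (d (b' s) (a s)) q.

(* Main.v *)
Require Import Defs.
From mathcomp Require Import all_boot all_order all_algebra.
From mathcomp Require Import all_classical all_reals all_analysis.
From mathcomp Require Import ring lra.
Import Order.TTheory GRing.Theory Num.Theory.
Local Open Scope ring_scope.

Lemma cvx_powR (R : realType) (p t x y : R) : 1 <= p -> 0 <= t -> t <= 1 -> 0 <= x -> 0 <= y ->
  (t * x + (1 - t) * y) `^ p <= t * x `^ p + (1 - t) * y `^ p.
Proof.
move=> p1 t0 t1 x0 y0.
by apply: (convex_powR p1 (Itv01 t0 t1)) => //=; rewrite ?inE/= ?in_itv/= ?x0 ?y0.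
Qed.

Lemma divpowR (R : realType) (p u t : R) : 0 <= u -> 0 < t ->
  (u / t) `^ p = u `^ p / t `^ p.
Proof.
move=> u0 t0; rewrite powRM // ?invr_ge0 ?ltW //; congr (_ * _).
rewrite -powR_inv1 ?ltW // -powRrM mulrC powRrM powR_inv1 // ?powR_ge0.
by [].
Qed.

Theorem lemma22 (R : realType) (q : R) (X : Type) (d : X -> X -> R)
  (K : nat) (w : 'I_K -> R) (a b : 'I_K -> X) (Ca : X) (alpha : R) :
  1 <= q ->
  is_metric d ->
  q_barycenter_property d q ->
  (1 <= K)%N ->
  in_simplex w ->
  is_bary_argmin d q w a Ca ->
  0 <= alpha <= 1 ->
  (forall s, d (a s) Ca = d (a s) (b s) + d (b s) Ca) ->
  (forall s, d (b s) (a s) = (1 - powR alpha (1 / q)) * d (a s) Ca) ->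
  feasible d q w (alpha * bary_cost d q w a Ca) b /\
  (forall b' : 'I_K -> X, feasible d q w (alpha * bary_cost d q w a Ca) b' ->
     move_cost d q w a b <= move_cost d q w a b').
Proof.
move=> q1 [d0 [dE [dC dT]]] qb K1 [w0 w1] Ha /andP[al0 al1] Hsplit Hba.
have q0 : 0 < q by apply: lt_le_trans q1.
set be := alpha `^ (1/q).
have be0 : 0 <= be by exact: powR_ge0.
have beq : be `^ q = alpha.
  by rewrite /be -powRrM mul1r mulVf ?gt_eqF // powRr1.
have be1 : be <= 1.
  have <- : 1 `^ (1/q) = 1 :> R by rewrite powR1.
  by apply: ge0_ler_powR => //; rewrite ?divr_ge0 ?ltW // nnegrE.
have Hbc s : d (b s) Ca = be * d (a s) Ca.
  have H := Hsplit s; rewrite (dC (a s) (b s)) Hba -/be in H.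
  apply: (addrI ((1 - be) * d (a s) Ca)); rewrite -H; ring.
set S := bary_cost d q w a Ca.
have costb : bary_cost d q w b Ca = alpha * S.
  rewrite /S /bary_cost mulr_sumr; apply: eq_bigr => s _.
  by rewrite Hbc powRM // beq mulrCA.
split.
  have [C HC] := qb K w b K1 (conj w0 w1).
  by exists C; split => //; rewrite -costb; exact: HC.
move=> b' [C' [_ HC']].
have t0 : 0 <= 1 - be by rewrite subr_ge0.
have mb : move_cost d q w a b = (1 - be) `^ q * S.
  rewrite /S /bary_cost /move_cost mulr_sumr; apply: eq_bigr => s _.
  by rewrite Hba -/be powRM // mulrCA.
rewrite mb.
have HS : S <= bary_cost d q w a C' := Ha C'.
have tri s : d (a s) C' <= d (b' s) (a s) + d (b' s) C'.
  by rewrite (dC (b' s) (a s)); apply: dT.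
have [->|bne1] := eqVneq be 1.
  rewrite subrr powR0 ?gt_eqF // mul0r /move_cost; apply: sumr_ge0 => s _.
  by rewrite mulr_ge0 // powR_ge0.
have [be_0|bne0] := eqVneq be 0.
  have al_0 : alpha = 0 by rewrite -beq be_0 powR0 // gt_eqF.
  rewrite be_0 subr0 powR1 mul1r; apply: le_trans HS _.
  have Hz : forall s, w s * d (b' s) C' `^ q = 0.
    move=> s; apply: (psumr_eq0P (P := xpredT) (F := fun s => w s * d (b' s) C' `^ q)) => //.
      by move=> i _; rewrite mulr_ge0 // powR_ge0.
    apply: le_anti; rewrite sumr_ge0 ?andbT; last by move=> i _; rewrite mulr_ge0 // powR_ge0.
    by move: HC'; rewrite al_0 mul0r.
  apply: ler_sum => s _.
  have [ws0|wsn0] := eqVneq (w s) 0; first by rewrite ws0 !mul0r.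
  move: (Hz s) => /eqP; rewrite mulf_eq0 (negbTE wsn0) /= => /eqP /powR_eq0_eq0 /dE eb.
  by rewrite -eb dC.
have tp : 0 < 1 - be by rewrite subr_gt0 lt_neqAle bne1.
have bp : 0 < be by rewrite lt_neqAle eq_sym bne0.
set t := 1 - be.
have Tp : 0 < t `^ q by apply: powR_gt0.
have Bp : 0 < be `^ q by apply: powR_gt0.
have conv s : (d (b' s) (a s) + d (b' s) C') `^ q <=
    t * (d (b' s) (a s) `^ q / t `^ q) + be * (d (b' s) C' `^ q / be `^ q).
  rewrite -!divpowR //.
  have := @cvx_powR R q t (d (b' s) (a s) / t) (d (b' s) C' / be) q1 (ltW tp).
  rewrite (_ : 1 - t = be); last by rewrite /t; ring.
  rewrite (_ : t * (d (b' s) (a s) / t) + be * (d (b' s) C' / be) =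
               d (b' s) (a s) + d (b' s) C'); last by field; rewrite ?gt_eqF.
  apply.
  - by rewrite /t gerBl.
  - by rewrite divr_ge0 // ltW.
  - by rewrite divr_ge0 // ltW.
set U := move_cost d q w a b'.
set V := bary_cost d q w b' C'.
have main : S <= t / t `^ q * U + be / be `^ q * V.
  apply: (le_trans HS); rewrite /U /V /move_cost /bary_cost !mulr_sumr -big_split /=.
  apply: ler_sum => s _.
  apply: (@le_trans _ _ (w s * (d (b' s) (a s) + d (b' s) C') `^ q)).
    by apply: ler_wpM2l => //; apply: ge0_ler_powR; rewrite ?nnegrE ?addr_ge0 // ltW.
  apply: (le_trans (ler_wpM2l (w0 s) (conv s))).
  by rewrite le_eqVlt; apply/orP; left; apply/eqP; ring.
have HV : be / be `^ q * V <= be * S.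
  apply: (le_trans (ler_wpM2l _ HC')); first by rewrite divr_ge0 // ltW.
  by rewrite -beq mulrA divfK ?gt_eqF.
have H : S <= t / t `^ q * U + be * S := le_trans main (lerD (lexx _) HV).
have H1 : t * S <= t * (U / t `^ q).
  rewrite (_ : t * (U / t `^ q) = t / t `^ q * U); last by ring.
  by rewrite {1}/t mulrBl mul1r lerBlDr.
rewrite ler_pM2l // in H1.
rewrite mulrC -ler_pdivlMr //.
Qed.
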